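(* Let $\eta:0\to X\xrightarrow{\iota}Y\xrightarrow{\pi}S\to0$ be a short exact sequence in $\operatorname{rep}(Q)$ and let $R$ be $R_d$ or $R_{d,\mathrm{str}}$. For every $(V,W)\in\operatorname{Im}\Psi$, the preimage $\Psi^{-1}((V,W))$ is a torsor under the vector space $\operatorname{Hom}_R(W,\Phi(X)/V)$; in particular there is a (non-canonical) bijection $\Psi^{-1}((V,W))\cong\operatorname{Hom}_R(W,\Phi(X)/V)$.
   Context: $K=\mathbb{C}$; $Q$ a finite quiver, $\operatorname{rep}(Q)$ its finite-dimensional representations. For $d\geqslant1$, $Q_d$ has vertices $v(Q)\times\{1,\dots,d\}$, arrows $(i,r)\to(i,r+1)$ ($r\leqslant d-1$) and $(i,r)\to(j,r)$ for each arrow $i\to j$ of $Q$, $r\in\{1,\dots,d\}$. For $d\geqslant2$, $Q_{d,\mathrm{str}}$ has the same vertices and vertical arrows and arrows $(i,r)\to(j,r-1)$ for each arrow $i\to j$, $r\in\{2,\dots,d\}$. $R_d=KQ_d/I$, $R_{d,\mathrm{str}}=KQ_{d,\mathrm{str}}/I$ with $I$ the ideal identifying all paths with equal source and target. $\Phi:\operatorname{rep}(Q)\to\operatorname{Mod}(R)$: $\Phi(X)_{(i,r)}=X_i$, identity on vertical arrows, $X_{i\to j}$ on arrows coming from $i\to j$, $\Phi(f)_{(i,r)}=f_i$. $\operatorname{Gr}^R(T)$ is the set of $R$-submodules of $T$. $\Psi:\operatorname{Gr}^R(\Phi(Y))\to\operatorname{Gr}^R(\Phi(X))\times\operatorname{Gr}^R(\Phi(S))$,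 $U\mapsto(\Phi(\iota)^{-1}(U),\Phi(\pi)(U))$. *)

(* Defs.v *)
(* Quiver representations encoded by matrices (row-vector
   convention: a linear map K^m -> K^n is a matrix 'M_(m, n) acting by v *m M),
   subspaces by square matrices via mxalgebra's row-space theory. *)
From HB Require Import structures.
From mathcomp Require Import all_boot all_algebra.
From mathcomp Require Import complex Rstruct.
Set Implicit Arguments.
Unset Strict Implicit.
Unset Printing Implicit Defensive.
Import GRing.Theory.
Local Open Scope ring_scope.

Definition KC : fieldType := (Rdefinitions.R)[i].

Record quiver := Quiver {
  qvert : finType;
  qarr : finType;
  qsrc : qarr -> qvert;
  qtgt : qarr -> qvert }.

Section Reps.
Variables (K : fieldType) (Q : quiver).

Record rep := Rep {
  rdim : qvert Q -> nat;
  rmap : forall a : qarr Q, 'M[K]_(rdim (qsrc a), rdim (qtgt a)) }.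

Definition repfam (X Y : rep) := forall i : qvert Q, 'M[K]_(rdim X i, rdim Y i).

Definition is_rep_hom (X Y : rep) (f : repfam X Y) : Prop :=
  forall a : qarr Q, rmap X a *m f (qtgt a) = f (qsrc a) *m rmap Y a.

Definition short_exact (X Y S : rep) (iota : repfam X Y) (pi : repfam Y S) : Prop :=
  [/\ is_rep_hom iota, is_rep_hom pi &
      forall i, [/\ row_free (iota i), row_full (pi i)
                  & (iota i == kermx (pi i))%MS]].

(* The algebras R_d (str = false, d >= 1) and R_{d,str} (str = true, d >= 2).
   Vertices of Q_d and Q_{d,str} are pairs (i, r) with i a vertex of Q and
   r : 'I_d (levels numbered 0..d-1 instead of 1..d).
   Arrows: vertical (i,r) -> (i,r') with r' = r+1, and, for every arrow
   a : i -> j of Q, a horizontal arrow (i,r) -> (j,r') where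
   r' = r      for Q_d,
   r' = r - 1  (r >= 1, i.e. r >= 2 in 1-based numbering) for Q_{d,str}. *)
Definition vert_step d (r r' : 'I_d) : bool := (r' == r.+1 :> nat).
Definition hor_step (str : bool) d (r r' : 'I_d) : bool :=
  if str then (r == r'.+1 :> nat) else (r == r' :> nat).

(* A family of subspaces of the vector spaces of Phi(X): Phi(X)_(i,r) = X_i. *)
Definition subfam (X : rep) d := forall p : qvert Q * 'I_d, 'M[K]_(rdim X p.1).

(* Gr^R(Phi(X)): R-submodules of Phi(X), i.e. subrepresentations of Phi(X)
   for the quiver Q_d resp. Q_{d,str}.  (The relations I hold automatically in
   submodules of R-modules.)  Phi(X) has identity maps on vertical arrows and
   X_a on arrows coming from a.  A subspace is represented by the canonical
   matrix <<U>> of its row space, so that Leibniz equality of families is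
   equality of submodules. *)
Definition is_Rsub (str : bool) d (X : rep) (U : subfam X d) : Prop :=
  [/\ forall p, (<<U p>>)%MS = U p,
      forall (i : qvert Q) (r r' : 'I_d), vert_step r r' ->
        (U (i, r) <= U (i, r'))%MS
    & forall (a : qarr Q) (r r' : 'I_d), hor_step str r r' ->
        (U (qsrc a, r) *m rmap X a <= U (qtgt a, r'))%MS].

(* Psi(U) = (V, W), where V = Phi(iota)^{-1}(U) and W = Phi(pi)(U);
   Phi(f)_(i,r) = f_i. *)
Definition Psi_is d (X Y S : rep) (iota : repfam X Y) (pi : repfam Y S)
    (U : subfam Y d) (V : subfam X d) (W : subfam S d) : Prop :=
  [/\ forall p, (<<V p>>)%MS = V p,
      forall p, (<<W p>>)%MS = W p,
      forall p (x : 'rV[K]_(rdim X p.1)),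
        (x <= V p)%MS = (x *m iota p.1 <= U p)%MS
    & forall p, (W p == U p *m pi p.1)%MS].

(* Hom_R(W, Phi(X)/V) for W in Gr^R(Phi(S)) and V in Gr^R(Phi(X)):
   a K-linear map W_p -> X_(p.1)/V_p is given by (the restriction to W_p of)
   a linear map f_p : S_(p.1) -> X_(p.1) followed by the quotient map, two
   families giving the same homomorphism iff they agree on W modulo V. *)
Definition homfam d (S X : rep) := forall p : qvert Q * 'I_d,
  'M[K]_(rdim S p.1, rdim X p.1).

Definition is_Rhom_quot (str : bool) d (S X : rep) (W : subfam S d)
    (V : subfam X d) (f : homfam d S X) : Prop :=
  (forall (i : qvert Q) (r r' : 'I_d), vert_step r r' ->
     (W (i, r) *m (f (i, r) - f (i, r')) <= V (i, r'))%MS) /\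
  (forall (a : qarr Q) (r r' : 'I_d), hor_step str r r' ->
     (W (qsrc a, r) *m (f (qsrc a, r) *m rmap X a - rmap S a *m f (qtgt a, r'))
        <= V (qtgt a, r'))%MS).

Definition hom_quot_eq d (S X : rep) (W : subfam S d) (V : subfam X d)
    (f g : homfam d S X) : Prop :=
  forall p, (W p *m (f p - g p) <= V p)%MS.

Definition homfam0 d (S X : rep) : homfam d S X := fun p => 0.
Definition homfamD d (S X : rep) (f g : homfam d S X) : homfam d S X :=
  fun p => f p + g p.

Definition Psi_fibre (str : bool) d (X Y S : rep) (iota : repfam X Y)
    (pi : repfam Y S) (V : subfam X d) (W : subfam S d) (U : subfam Y d) : Prop :=
  is_Rsub str U /\ Psi_is iota pi U V W.

(* T is a torsor (principal homogeneous space) under the additive group of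
   the vector space H = { f | Hf f } / eqH, with zero 0 and addition +. *)
Definition is_torsor (T H : Type) (inT : T -> Prop) (Hf : H -> Prop)
    (eqH : H -> H -> Prop) (zero : H) (add : H -> H -> H)
    (act : H -> T -> T) : Prop :=
  [/\ (exists t, inT t),
      (forall f t, Hf f -> inT t -> inT (act f t)),
      (forall f g t, Hf f -> Hf g -> eqH f g -> inT t -> act f t = act g t),
      (forall t, inT t -> act zero t = t) &
   [/\
      (forall f g t, Hf f -> Hf g -> inT t -> act (add f g) t = act f (act g t)),
      (forall t t', inT t -> inT t' -> exists2 f, Hf f & act f t = t')
    & (forall f t, Hf f -> inT t -> act f t = t -> eqH f zero)]].

Definition is_bij_quot (T H : Type) (inT : T -> Prop) (Hf : H -> Prop)
    (eqH : H -> H -> Prop) (F : T -> H) : Prop :=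
  [/\ (forall t, inT t -> Hf (F t)),
      (forall t t', inT t -> inT t' -> eqH (F t) (F t') -> t = t')
    & (forall f, Hf f -> exists2 t, inT t & eqH (F t) f)].

End Reps.

(* Main.v *)
Require Import Defs.
From mathcomp Require Import all_boot all_algebra.
Import GRing.Theory.
Local Open Scope ring_scope.

Section Aux.
Set Implicit Arguments.
Unset Strict Implicit.
Section LinS.
Lemma zm1 (Z : zmodType) (a b c e : Z) : (a - b) - ((a - c) - e) = c + e - b.
Proof. by rewrite opprB opprB (addrC e) addrA (addrC (a - b)) addrA subrK addrAC. Qed.
Lemma zm2 (Z : zmodType) (a b c : Z) : b = c + ((a - c) - (a - b)).
Proof. by rewrite opprB addrA (addrC c) subrK addrC subrK. Qed.
Lemma zm3 (Z : zmodType) (x y : Z) : x - (x - y) = y.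
Proof. by rewrite opprB addrC subrK. Qed.
Variable K : fieldType.

Lemma subB_sub m1 m2 n (A B : 'M[K]_(m1, n)) (C : 'M_(m2, n)) :
  (A <= C)%MS -> (B <= C)%MS -> (A - B <= C)%MS.
Proof. by move=> hA hB; rewrite addmx_sub // eqmx_opp. Qed.

Lemma sub_rearr (Z : zmodType) (a b c d : Z) : a - b - (c - d) = (a - c) - (b - d).
Proof. by rewrite !opprB addrACA [RHS]addrACA (addrC (-c)). Qed.

Variables (m n k : nat) (io : 'M[K]_(m,n)) (pr : 'M[K]_(n,k)).
Hypothesis iopr : io *m pr = 0.
Hypothesis kerpr : forall r (A : 'M_(r,n)), A *m pr = 0 -> A *m pinvmx io *m io = A.
Hypothesis iofree : row_free io.

Definition Mg (g : 'M[K]_(k,m)) : 'M_n := 1%:M + pr *m g *m io.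

Lemma iopr' r (A : 'M_(r, m)) : A *m io *m pr = 0.
Proof. by rewrite -mulmxA iopr mulmx0. Qed.

Lemma Mg_pr g : Mg g *m pr = pr.
Proof. by rewrite mulmxDl mul1mx iopr' addr0. Qed.

Lemma io_Mg g : io *m Mg g = io.
Proof. by rewrite mulmxDr mulmx1 !mulmxA iopr !mul0mx addr0. Qed.

Lemma Mg_mul f g : Mg g *m Mg f = Mg (g + f).
Proof.
rewrite [Mg g *m _]mulmxDl mul1mx [X in _ + X]mulmxDr mulmx1.
have -> : pr *m g *m io *m (pr *m f *m io) = 0 by rewrite !mulmxA iopr' !mul0mx.
rewrite addr0 /Mg.
by rewrite mulmxDr mulmxDl addrA [_ + pr *m g *m io]addrAC -addrA.
Qed.

Lemma Mg0 : Mg 0 = 1%:M.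
Proof. by rewrite /Mg mulmx0 mul0mx addr0. Qed.

Lemma Mg_split f f' : Mg f = Mg f' + pr *m (f - f') *m io.
Proof.
rewrite /Mg mulmxBr mulmxBl -addrA; congr (_ + _).
by rewrite addrC subrK.
Qed.

Definition L (U : 'M[K]_n) : 'M_(k, n) := pinvmx (U *m pr) *m U.

Lemma L_sub r (A : 'M_(r,k)) U : (A *m L U <= U)%MS.
Proof. by rewrite mulmxA submxMl. Qed.

Lemma L_pr r (A : 'M_(r,k)) U : (A <= U *m pr)%MS -> A *m L U *m pr = A.
Proof. by move=> h; rewrite /L mulmxA -(mulmxA _ U pr) mulmxKpV. Qed.

Lemma LMg r (A : 'M_(r,k)) U g : (A <= U *m pr)%MS ->
  A *m L U *m Mg g = A *m L U + A *m g *m io.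
Proof.
move=> h; rewrite /Mg mulmxDr mulmx1; congr (_ + _).
set B := A *m L U.
by rewrite mulmxA mulmxA /B (L_pr h).
Qed.

Definition Fm (U U0 : 'M[K]_n) : 'M_(k, m) := (L U0 - L U) *m pinvmx io.

Lemma FL r (A : 'M_(r,k)) U U0 : (A <= U *m pr)%MS -> (A <= U0 *m pr)%MS ->
  A *m Fm U U0 *m io = A *m L U0 - A *m L U.
Proof.
move=> h h0; rewrite /Fm mulmxA kerpr; first by rewrite mulmxBr.
by rewrite mulmxBr mulmxBl L_pr // L_pr // subrr.
Qed.

Section Fib.
Variables (U : 'M[K]_n) (V : 'M[K]_m) (W : 'M[K]_k).
Hypothesis P3 : forall x : 'rV_m, (x <= V)%MS = (x *m io <= U)%MS.
Hypothesis P4 : (W == U *m pr)%MS.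

Lemma G r (Z : 'M_(r,m)) : (Z *m io <= U)%MS = (Z <= V)%MS.
Proof.
apply/row_subP/row_subP => H i.
  by rewrite P3 -row_mul.
by rewrite row_mul -P3.
Qed.

Lemma VioU : (V *m io <= U)%MS.
Proof. by rewrite G. Qed.

Lemma WUpr : (W <= U *m pr)%MS.
Proof. by case/andP: P4. Qed.

Lemma UprW : (U *m pr <= W)%MS.
Proof. by case/andP: P4. Qed.

Lemma ker_in r (P : 'M_(r,n)) : (P <= U)%MS -> P *m pr = 0 -> (P *m pinvmx io <= V)%MS.
Proof. by move=> hP h0; rewrite -G kerpr. Qed.

Lemma act_P3 g (x : 'rV_m) : (x <= V)%MS = (x *m io <= <<U *m Mg g>>)%MS.
Proof.
rewrite genmxE; apply/idP/idP => h.
  by rewrite -(io_Mg g) mulmxA submxMr // -P3.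
case/submxP: h => D hD.
set u := D *m U.
have hu : u = x *m io - u *m pr *m g *m io.
  by rewrite hD /Mg !mulmxA mulmxDr mulmx1 !mulmxA addrK.
have hupr : u *m pr = 0.
  by rewrite {1}hu mulmxBl iopr' iopr' subr0.
move: hu; rewrite hupr !mul0mx subr0 => hu.
by rewrite P3 -hu /u submxMl.
Qed.

Lemma act_P4 g : (W == <<U *m Mg g>> *m pr)%MS.
Proof.
apply/eqmxP; apply: eqmx_trans (eqmx_sym (eqmxMr pr (genmxE _))) .
by rewrite -mulmxA Mg_pr; apply/eqmxP.
Qed.

End Fib.

Lemma step n1 k1 (U1 : 'M[K]_n1) (B : 'M_(n1,n)) (U2 M2 : 'M_n)
  (pr1 : 'M_(n1,k1)) (W1 : 'M_k1) (C : 'M_(k1,m)) (V2 : 'M_m) :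
  (U1 *m B <= U2)%MS -> (U1 *m pr1 <= W1)%MS -> (W1 *m C <= V2)%MS ->
  (V2 *m io <= U2)%MS -> io *m M2 = io ->
  (U1 *m (B *m M2 + pr1 *m C *m io) <= U2 *m M2)%MS.
Proof.
move=> hB hW hC hV hM; rewrite mulmxDr addmx_sub //.
  by rewrite mulmxA submxMr.
rewrite -{1}hM !mulmxA submxMr //.
apply: submx_trans hV; rewrite submxMr //.
by apply: submx_trans hC; rewrite submxMr.
Qed.

Lemma step1 k1 (U1 : 'M[K]_n) (U2 M2 : 'M_n)
  (pr1 : 'M_(n,k1)) (W1 : 'M_k1) (C : 'M_(k1,m)) (V2 : 'M_m) :
  (U1 <= U2)%MS -> (U1 *m pr1 <= W1)%MS -> (W1 *m C <= V2)%MS ->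
  (V2 *m io <= U2)%MS -> io *m M2 = io ->
  (U1 *m (M2 + pr1 *m C *m io) <= U2 *m M2)%MS.
Proof.
move=> hU hW hC hV hM; rewrite -[M2 in M2 + _]mul1mx; apply: (step (W1:=W1) (V2:=V2)); rewrite ?mulmx1 //. Qed.

Lemma comb r (Z : 'M_(r,m)) (U U0 : 'M[K]_n) (V : 'M[K]_m) (P P0 : 'M_(r,n)) :
  (forall x : 'rV_m, (x <= V)%MS = (x *m io <= U)%MS) ->
  (forall x : 'rV_m, (x <= V)%MS = (x *m io <= U0)%MS) ->
  Z *m io = P0 - P -> (P0 <= U0)%MS -> (P <= U)%MS -> P0 *m pr = 0 -> P *m pr = 0 ->
  (Z <= V)%MS.
Proof.
move=> h h0 hZ hP0 hP e0 e.
have -> : Z = P0 *m pinvmx io - P *m pinvmx io.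
  apply: (row_free_inj iofree); rewrite /= mulmxBl !kerpr //.
by apply: subB_sub; [exact: (ker_in h0)| exact: (ker_in h)].
Qed.

Lemma key_aux (U U' U0 : 'M[K]_n) (V : 'M[K]_m) (W : 'M[K]_k) g :
  (forall x : 'rV_m, (x <= V)%MS = (x *m io <= U')%MS) ->
  (W <= U *m pr)%MS -> (W <= U' *m pr)%MS -> (W <= U0 *m pr)%MS ->
  (U *m Mg g <= U')%MS ->
  (W *m (Fm U' U0 - (Fm U U0 - g)) <= V)%MS.
Proof.
move=> p3' hW hW' hW0 hUM.
rewrite -(G p3') !mulmxBr !mulmxBl (FL hW' hW0) (FL hW hW0) zm1.
rewrite -(LMg _ hW); apply: subB_sub; last exact: L_sub.
apply: submx_trans hUM; apply: submxMr; exact: L_sub.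
Qed.

Lemma le_aux (U U' U0 : 'M[K]_n) (V : 'M[K]_m) (W : 'M[K]_k) :
  (forall x : 'rV_m, (x <= V)%MS = (x *m io <= U)%MS) ->
  (forall x : 'rV_m, (x <= V)%MS = (x *m io <= U')%MS) ->
  (W == U *m pr)%MS -> (W == U' *m pr)%MS -> (W <= U0 *m pr)%MS ->
  (W *m (Fm U' U0 - Fm U U0) <= V)%MS -> (U <= U')%MS.
Proof.
move=> p3 p3' p4 p4' hW0 h.
set A := U *m pr.
have hA : (A <= W)%MS := UprW p4.
have hAU : (A <= U *m pr)%MS := submx_refl A.
have hAU' : (A <= U' *m pr)%MS := submx_trans hA (WUpr p4').
have hAU0 : (A <= U0 *m pr)%MS := submx_trans hA hW0.
rewrite -[X in (X <= _)%MS](subrK (A *m L U)).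
apply: addmx_sub.
  have hP : (U - A *m L U) *m pr = 0.
    by rewrite mulmxBl (L_pr hAU) subrr.
  rewrite -(kerpr hP) (G p3').
  apply: (ker_in p3); last exact: hP.
  apply: subB_sub; [exact: submx_refl | exact: L_sub].
have e2 : A *m L U = A *m L U' + A *m (Fm U' U0 - Fm U U0) *m io.
  by rewrite mulmxBr mulmxBl (FL hAU' hAU0) (FL hAU hAU0) -zm2.
rewrite e2; apply: addmx_sub; first exact: L_sub.
rewrite (G p3'); apply: submx_trans h; exact: submxMr hA.
Qed.

Lemma vert_aux (U U' U0 U0' : 'M[K]_n) (V' : 'M[K]_m) (W : 'M[K]_k) :
  (forall x : 'rV_m, (x <= V')%MS = (x *m io <= U')%MS) ->
  (forall x : 'rV_m, (x <= V')%MS = (x *m io <= U0')%MS) ->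
  (W <= U *m pr)%MS -> (W <= U0 *m pr)%MS -> (U <= U')%MS -> (U0 <= U0')%MS ->
  (W *m (Fm U U0 - Fm U' U0') <= V')%MS.
Proof.
move=> p3 p30 hWr hWr0 hv hv0.
have hWr' : (W <= U' *m pr)%MS := submx_trans hWr (submxMr _ hv).
have hWr0' : (W <= U0' *m pr)%MS := submx_trans hWr0 (submxMr _ hv0).
apply: (comb p3 p30 (P := W *m L U - W *m L U') (P0 := W *m L U0 - W *m L U0')).
+ by rewrite mulmxBr mulmxBl (FL hWr hWr0) (FL hWr' hWr0') sub_rearr.
+ apply: subB_sub; last exact: L_sub.
  apply: submx_trans hv0; exact: L_sub.
+ apply: subB_sub; last exact: L_sub.
  apply: submx_trans hv; exact: L_sub.
+ by rewrite mulmxBl (L_pr hWr0) (L_pr hWr0') subrr.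
+ by rewrite mulmxBl (L_pr hWr) (L_pr hWr') subrr.
Qed.

End LinS.

Lemma hor_aux (K : fieldType) ms ns ks mt nt kt (ios : 'M[K]_(ms,ns)) (prs : 'M_(ns,ks))
  (iot : 'M_(mt,nt)) (prt : 'M_(nt,kt)) (Xa : 'M_(ms,mt)) (Ya : 'M_(ns,nt)) (Sa : 'M_(ks,kt))
  (Us U0s : 'M_ns) (Ut U0t : 'M_nt) (Ws : 'M_ks) (Vt : 'M_mt) :
  (forall r (A : 'M_(r,ns)), A *m prs = 0 -> A *m pinvmx ios *m ios = A) ->
  (forall r (A : 'M_(r,nt)), A *m prt = 0 -> A *m pinvmx iot *m iot = A) ->
  row_free iot ->
  Xa *m iot = ios *m Ya -> Ya *m prt = prs *m Sa ->
  (forall x : 'rV_mt, (x <= Vt)%MS = (x *m iot <= Ut)%MS) ->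
  (forall x : 'rV_mt, (x <= Vt)%MS = (x *m iot <= U0t)%MS) ->
  (Ws <= Us *m prs)%MS -> (Ws <= U0s *m prs)%MS ->
  (Us *m Ya <= Ut)%MS -> (U0s *m Ya <= U0t)%MS ->
  (Ws *m (Fm ios prs Us U0s *m Xa - Sa *m Fm iot prt Ut U0t) <= Vt)%MS.
Proof.
move=> kers kert freet hio hpr p3 p30 hWs hWs0 hor hor0.
have hWsa : (Ws *m Sa <= Ut *m prt)%MS.
  apply: submx_trans (submxMr _ hWs) _; rewrite -mulmxA -hpr mulmxA.
  exact: submxMr.
have hWsa0 : (Ws *m Sa <= U0t *m prt)%MS.
  apply: submx_trans (submxMr _ hWs0) _; rewrite -mulmxA -hpr mulmxA.
  exact: submxMr.
apply: (comb kert freet p3 p30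
    (P := Ws *m L prs Us *m Ya - Ws *m Sa *m L prt Ut)
    (P0 := Ws *m L prs U0s *m Ya - Ws *m Sa *m L prt U0t)).
+ rewrite mulmxBr mulmxBl.
  have e1 : Ws *m (Fm ios prs Us U0s *m Xa) *m iot =
      (Ws *m L prs U0s - Ws *m L prs Us) *m Ya.
    by rewrite mulmxA -mulmxA hio mulmxA (FL kers hWs hWs0).
  have e2 : Ws *m (Sa *m Fm iot prt Ut U0t) *m iot =
      Ws *m Sa *m L prt U0t - Ws *m Sa *m L prt Ut.
    by rewrite mulmxA (FL kert hWsa hWsa0).
  by rewrite e1 e2 mulmxBl sub_rearr.
+ apply: subB_sub; last exact: L_sub.
  apply: submx_trans hor0; apply: submxMr; exact: L_sub.
+ apply: subB_sub; last exact: L_sub.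
  apply: submx_trans hor; apply: submxMr; exact: L_sub.
+ by rewrite mulmxBl -(mulmxA (Ws *m L prs U0s)) hpr mulmxA (L_pr hWs0) (L_pr hWsa0) subrr.
+ by rewrite mulmxBl -(mulmxA (Ws *m L prs Us)) hpr mulmxA (L_pr hWs) (L_pr hWsa) subrr.
Qed.
Lemma Mg_hom (K : fieldType) ms ns ks mt nt kt (ios : 'M[K]_(ms,ns)) (prs : 'M_(ns,ks))
  (iot : 'M_(mt,nt)) (prt : 'M_(nt,kt)) (Xa : 'M_(ms,mt)) (Ya : 'M_(ns,nt)) (Sa : 'M_(ks,kt))
  fs ft :
  ios *m Ya = Xa *m iot -> Ya *m prt = prs *m Sa ->
  Mg ios prs fs *m Ya = Ya *m Mg iot prt ft + prs *m (fs *m Xa - Sa *m ft) *m iot.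
Proof.
move=> hio hpr; rewrite /Mg mulmxDl mul1mx mulmxDr mulmx1 -addrA; congr (_ + _).
rewrite -mulmxA hio mulmxA !mulmxA hpr mulmxBr mulmxBl !mulmxA.
by rewrite addrC subrK.
Qed.


Lemma simp1 (K : fieldType) m k n (W : 'M[K]_(m,k)) (V : 'M[K]_n) (B A f : 'M[K]_(k,n)) :
  (W *m (B - (A - (A - f))) <= V)%MS -> (W *m (B - f) <= V)%MS.
Proof. by rewrite zm3. Qed.
Lemma simp2 (K : fieldType) m k n (W : 'M[K]_(m,k)) (V : 'M[K]_n) (A f : 'M[K]_(k,n)) :
  (W *m (A - (A - f)) <= V)%MS -> (W *m (f - 0) <= V)%MS.
Proof. by rewrite zm3 subr0. Qed.
End Aux.

From Stdlib Require Import FunctionalExtensionality.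

Theorem lemma3p13 (Q : quiver) (X Y S : rep KC Q)
    (iota : repfam X Y) (pi : repfam Y S)
    (str : bool) (d : nat)
    (hd : if str then (1 < d)%N else (0 < d)%N)
    (eta : short_exact iota pi)
    (V : subfam X d) (W : subfam S d)
    (hIm : exists U : subfam Y d, is_Rsub str U /\ Psi_is iota pi U V W) :
  (exists act : homfam d S X -> subfam Y d -> subfam Y d,
     is_torsor (Psi_fibre str iota pi V W) (is_Rhom_quot str W V)
       (hom_quot_eq W V) (@homfam0 _ _ d S X) (@homfamD _ _ d S X) act) /\
  (exists F : subfam Y d -> homfam d S X,
     is_bij_quot (Psi_fibre str iota pi V W) (is_Rhom_quot str W V)
       (hom_quot_eq W V) F).
Proof.
case: eta => hiota hpi hex.
have iopr i : iota i *m pi i = 0.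
  by case: (hex i) => _ _ /andP[e1 _]; apply/eqP; rewrite -sub_kermx.
have kerpr i r (A : 'M_(r, rdim Y i)) : A *m pi i = 0 -> A *m pinvmx (iota i) *m iota i = A.
  case: (hex i) => _ _ /andP[_ e2] h; apply: mulmxKpV; apply: submx_trans e2.
  by rewrite sub_kermx h.
have iofree i : row_free (iota i) by case: (hex i).
case: hIm => U0 [hU0R hU0P].
have hU0 : Psi_fibre str iota pi V W U0 by [].
pose act (f : homfam d S X) (U : subfam Y d) : subfam Y d :=
  fun p => <<U p *m Mg (iota p.1) (pi p.1) (f p)>>%MS.
pose F (U : subfam Y d) : homfam d S X :=
  fun p => Fm (iota p.1) (pi p.1) (U p) (U0 p).
have FE : forall U p, F U p = Fm (iota p.1) (pi p.1) (U p) (U0 p) by [].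
have Hfib : forall f U, is_Rhom_quot str W V f -> Psi_fibre str iota pi V W U ->
    Psi_fibre str iota pi V W (act f U).
  move=> f U [hf1 hf2] [[c vert hor] [pV pW p3 p4]].
  split; split; [| | | exact: pV | exact: pW | |].
  - by move=> p; rewrite /act genmx_id.
  - move=> i r r' hs; rewrite /act !genmxE /=.
    rewrite (Mg_split _ _ (f (i, r)) (f (i, r'))).
    apply: (step1 (W1 := W (i,r)) (V2 := V (i,r'))).
    + exact: vert.
    + exact: UprW (p4 (i,r)).
    + exact: hf1.
    + exact: VioU (p3 (i,r')).
    + exact: io_Mg.
  - move=> a r r' hs; rewrite /act genmxE (eqmxMr _ (genmxE _)) /=.
    rewrite -mulmxA (Mg_hom _ (f (qtgt a, r')) (esym (hiota a)) (hpi a)).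
    apply: (step (W1 := W (qsrc a,r)) (V2 := V (qtgt a,r'))).
    + exact: hor.
    + exact: UprW (p4 (qsrc a,r)).
    + exact: hf2.
    + exact: VioU (p3 (qtgt a,r')).
    + exact: io_Mg.
  - move=> p x; exact: act_P3.
  - move=> p; exact: act_P4.
have Hwd : forall f g U, Psi_fibre str iota pi V W U -> hom_quot_eq W V f g ->
    act f U = act g U.
  move=> f g U [_ [_ _ p3 p4]] h; apply: functional_extensionality_dep => p.
  rewrite /act; apply/genmxP/andP; split.
    rewrite (Mg_split _ _ (f p) (g p)).
    apply: (step1 (W1 := W p) (V2 := V p)).
    + exact: submx_refl.
    + exact: UprW (p4 p).
    + exact: h.
    + exact: VioU (p3 p).
    + exact: io_Mg.
  rewrite (Mg_split _ _ (g p) (f p)).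
  apply: (step1 (W1 := W p) (V2 := V p)).
  + exact: submx_refl.
  + exact: UprW (p4 p).
  + rewrite -opprB mulmxN eqmx_opp; exact: h.
  + exact: VioU (p3 p).
  + exact: io_Mg.
have Hzero : forall U, Psi_fibre str iota pi V W U -> act (@homfam0 _ _ d S X) U = U.
  move=> U [[c _ _] _]; apply: functional_extensionality_dep => p.
  rewrite /act /homfam0 Mg0 mulmx1; exact: c.
have Hadd : forall f g U, act (@homfamD _ _ d S X f g) U = act f (act g U).
  move=> f g U; apply: functional_extensionality_dep => p.
  rewrite /act /homfamD; apply/genmxP/eqmxP.
  apply: eqmx_trans (eqmx_sym (eqmxMr _ (genmxE _))).
  rewrite -mulmxA (Mg_mul (iopr _)) addrC; exact: eqmx_refl.
case: (hU0P) => _ _ p30 p40.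
case: (hU0R) => c0 vert0 hor0.
have Hkey : forall g U, Psi_fibre str iota pi V W U -> forall p,
    (W p *m (F (act g U) p - (F U p - g p)) <= V p)%MS.
  move=> g U [_ [_ _ p3 p4]] p.
  apply: (key_aux (kerpr p.1) (act_P3 (iopr p.1) (p3 p) (g p)) (WUpr (p4 p))
    (WUpr (act_P4 (iopr p.1) (p4 p) (g p))) (WUpr (p40 p))).
  rewrite /act genmxE; exact: submx_refl.
have Hle : forall U U', Psi_fibre str iota pi V W U -> Psi_fibre str iota pi V W U' ->
    (forall p, (W p *m (F U' p - F U p) <= V p)%MS) -> forall p, (U p <= U' p)%MS.
  move=> U U' [_ [_ _ p3 p4]] [_ [_ _ p3' p4']] h p.
  exact: (le_aux (kerpr p.1) (p3 p) (p3' p) (p4 p) (p4' p) (WUpr (p40 p)) (h p)).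
have Hinj : forall U U', Psi_fibre str iota pi V W U -> Psi_fibre str iota pi V W U' ->
    hom_quot_eq W V (F U) (F U') -> U = U'.
  move=> U U' hU hU' h; apply: functional_extensionality_dep => p.
  have [[c _ _] _] := hU; have [[c' _ _] _] := hU'.
  rewrite -(c p) -(c' p); apply/genmxP/andP; split.
    apply: (Hle _ _ hU hU') => q; rewrite -opprB mulmxN eqmx_opp; exact: h q.
  apply: (Hle _ _ hU' hU) => q; exact: h q.
have Hsub : forall f g, is_Rhom_quot str W V f -> is_Rhom_quot str W V g ->
    is_Rhom_quot str W V (fun p => f p - g p).
  move=> f g [f1 f2] [g1 g2]; split.
    move=> i r r' hs /=; rewrite sub_rearr mulmxBr.
    apply: subB_sub; [exact: f1 | exact: g1].
  move=> a r r' hs /=.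
  rewrite mulmxBl [rmap S a *m _]mulmxBr sub_rearr mulmxBr.
  apply: subB_sub; [exact: f2 | exact: g2].
have HFhom : forall U, Psi_fibre str iota pi V W U -> is_Rhom_quot str W V (F U).
  move=> U [[c vert hor] [_ _ p3 p4]]; split.
    move=> i r r' hs.
    exact: (vert_aux (kerpr i) (iofree i) (p3 (i,r')) (p30 (i,r'))
      (WUpr (p4 (i,r))) (WUpr (p40 (i,r))) (vert i r r' hs) (vert0 i r r' hs)).
  move=> a r r' hs.
  exact: (hor_aux (kerpr _) (kerpr _) (iofree _) (hiota a) (hpi a)
    (p3 (qtgt a, r')) (p30 (qtgt a, r')) (WUpr (p4 (qsrc a, r))) (WUpr (p40 (qsrc a, r)))
    (hor a r r' hs) (hor0 a r r' hs)).
have Hsimp : forall g U, Psi_fibre str iota pi V W U -> forall p,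
    (W p *m (F (act (fun q => F U q - g q) U) p - g p) <= V p)%MS.
  move=> g U hU p; exact: simp1 (Hkey (fun q => F U q - g q) U hU p).
split.
  exists act; split.
  - exists U0; exact: hU0.
  - move=> f t hf ht; exact: Hfib.
  - move=> f g t _ _ h ht; exact: Hwd.
  - move=> t ht; exact: Hzero.
  split.
  - move=> f g t _ _ ht; exact: Hadd.
  - move=> t t' ht ht'; exists (fun p => F t p - F t' p).
      exact: Hsub (HFhom t ht) (HFhom t' ht').
    apply: Hinj (Hfib _ _ (Hsub _ _ (HFhom t ht) (HFhom t' ht')) ht) ht' _.
    move=> p; exact: Hsimp.
  - move=> f t hf ht e p.
    have := Hkey f t ht p; rewrite e => H; exact: simp2 H.
exists F; split.
- exact: HFhom.
- move=> t t' ht ht' h; exact: Hinj.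
- move=> f hf; exists (act (fun q => F U0 q - f q) U0).
    exact: Hfib _ _ (Hsub _ _ (HFhom U0 hU0) hf) hU0.
  move=> p; exact: Hsimp.
Qed.
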